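(* Let $k\in\mathbb{N}$ and $\widetilde{M}_k=\{(x,y,z)\in\mathbb{C}^3 : x^2+y^2+z^{k+1}=0\}$, with coordinate ring $\mathbb{C}[\widetilde{M}_k]$ and holomorphic symplectic form $\widetilde{\omega}=\frac{dx\wedge dy}{(k+1)z^k}=\frac{dy\wedge dz}{2x}=\frac{dz\wedge dx}{2y}$ on $\widetilde{M}_k\setminus\{0\}$. Define the tangent vector fields \begin{align*} \widetilde{V}^x&=(k+1)z^k\partial_y-2y\partial_z,\quad \widetilde{V}^y=-(k+1)z^k\partial_x+2x\partial_z,\quad \widetilde{V}^z=2y\partial_x-2x\partial_y,\\ \widetilde{\Lambda}&=(k+1)x\partial_x+(k+1)y\partial_y+2z\partial_z. \end{align*} Then the space of polynomial vector fields on $\widetilde{M}_k$ equals \[ \big(\mathbb{C}[\widetilde{M}_k]\widetilde{V}^x+\mathbb{C}[\widetilde{M}_k]\widetilde{V}^y+\mathbb{C}[\widetilde{M}_k]\widetilde{V}^z\big)\oplus\mathrm{span}_{\mathbb{C}}\{1,z,\dots,z^{k-1}\}\cdot\widetilde{\Lambda}, \] the vector fields $\widetilde{V}^x,\widetilde{V}^y,\widetilde{V}^z$ are Hamiltonian with respect to $\widetilde{\omega}$ on $\widetilde{M}_k\setminus\{0\}$, and $\widetilde{\Lambda}$ is not a holomorphic symplectic vector field.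
   Context: Polynomial vector fields on an affine variety are the (restrictions to it of) polynomial vector fields on $\mathbb{C}^3$ tangent to it, i.e. derivations of the coordinate ring. A vector field $V$ is Hamiltonian if $i_V\widetilde{\omega}$ is exact on the regular part, and symplectic if $i_V\widetilde{\omega}$ is closed there. *)

(* Defs.v *)
From HB Require Import structures.
From mathcomp Require Import all_boot all_order all_algebra.
From mathcomp Require Import mpoly.
Set Implicit Arguments. Unset Strict Implicit. Unset Printing Implicit Defensive.
Import Order.TTheory GRing.Theory Num.Theory.
Local Open Scope ring_scope.

(* Coordinates on F^3: index 0 = x, 1 = y, 2 = z.
   F is an algebraically closed field of characteristic 0 with a numeric
   structure (e.g. the complex numbers). *)

Section Defs.
Variable F : numClosedFieldType.

Notation P := {mpoly F[3]}.
Definition pt := 'I_3 -> F.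
Definition vfield := 'I_3 -> P.
Definition form1 := ((('I_3 -> P) * P)%type).  (* rational 1-form (sum_j g_j dx_j) / D *)
Definition form2 := ((('I_3 -> 'I_3 -> P) * P)%type).
  (* rational 2-form (sum_{i,j} b_ij dx_i (x) dx_j) / D, b antisymmetric *)

Definition i0 : 'I_3 := @Ordinal 3 0 isT.
Definition i1 : 'I_3 := @Ordinal 3 1 isT.
Definition i2 : 'I_3 := @Ordinal 3 2 isT.
Definition xP : P := 'X_i0.
Definition yP : P := 'X_i1.
Definition zP : P := 'X_i2.

Definition fk (k : nat) : P := xP ^+ 2 + yP ^+ 2 + zP ^+ k.+1.

Definition onM (k : nat) (p : pt) : Prop := (fk k).@[p] = 0.

Definition dpol (g : P) (p : pt) (U : pt) : F :=
  \sum_(i < 3) (mderiv i g).@[p] * U i.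

Definition tangent_at (k : nat) (p U : pt) : Prop := dpol (fk k) p U = 0.

Definition vf_at (V : vfield) (p : pt) : pt := fun i => (V i).@[p].

Definition vf_act (V : vfield) (g : P) : P := \sum_(i < 3) V i * mderiv i g.

(* V is tangent to M_k (i.e. induces a derivation of C[M_k]) *)
Definition tangent_vf (k : nat) (V : vfield) : Prop :=
  forall p, onM k p -> (vf_act V (fk k)).@[p] = 0.

Definition eqOnM (k : nat) (V W : vfield) : Prop :=
  forall p, onM k p -> vf_at V p = vf_at W p.

Definition vf_add (V W : vfield) : vfield := fun i => V i + W i.
Definition vf_scale (g : P) (V : vfield) : vfield := fun i => g * V i.

Definition mk3 (a b c : P) : vfield :=
  fun i => if i == i0 then a else if i == i1 then b else c.

Definition Vx (k : nat) : vfield := mk3 0 ((k.+1)%:R * zP ^+ k) (- (2%:R * yP)).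
Definition Vy (k : nat) : vfield := mk3 (- ((k.+1)%:R * zP ^+ k)) 0 (2%:R * xP).
Definition Vz (k : nat) : vfield := mk3 (2%:R * yP) (- (2%:R * xP)) 0.
Definition Lam (k : nat) : vfield :=
  mk3 ((k.+1)%:R * xP) ((k.+1)%:R * yP) (2%:R * zP).

Definition zpoly (k : nat) (c : 'I_k -> F) : P :=
  \sum_(i < k) (c i)%:MP * zP ^+ i.

(* dx_i /\ dx_j as an antisymmetric bilinear coefficient array *)
Definition wedge (i j : 'I_3) : 'I_3 -> 'I_3 -> P :=
  fun a b => ((a == i) && (b == j))%:R - ((a == j) && (b == i))%:R.

(* The symplectic form omega on the three charts of M_k \ {0}:
   chart 0 (x <> 0): dy/\dz / (2x); chart 1 (y <> 0): dz/\dx / (2y);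
   chart 2 (z <> 0): dx/\dy / ((k+1) z^k). *)
Definition omega_chart (k : nat) (c : 'I_3) : form2 :=
  if c == i0 then (wedge i1 i2, 2%:R * xP)
  else if c == i1 then (wedge i2 i0, 2%:R * yP)
  else (wedge i0 i1, (k.+1)%:R * zP ^+ k).

Definition interior (V : vfield) (b : form2) : form1 :=
  (fun j => \sum_(i < 3) V i * b.1 i j, b.2).

Definition form1_at (a : form1) (p U : pt) : F :=
  (\sum_(j < 3) (a.1 j).@[p] * U j) / a.2.@[p].

(* value at p on (U, W) of the exterior derivative of the rational 1-form
   a = g / D, i.e. d(g/D) = (dg)/D - (dD /\ g)/D^2 *)
Definition dform1_at (a : form1) (p U W : pt) : F :=
  let g := a.1 in let D := a.2 in
  (\sum_(i < 3) \sum_(j < 3) (mderiv i (g j)).@[p] * (U i * W j - U j * W i))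
    / D.@[p]
  - (dpol D p U * (\sum_(j < 3) (g j).@[p] * W j)
     - dpol D p W * (\sum_(j < 3) (g j).@[p] * U j)) / (D.@[p]) ^+ 2.

Definition in_chart (k : nat) (c : 'I_3) (p : pt) : Prop :=
  onM k p /\ p <> (fun _ => 0) /\ (omega_chart k c).2.@[p] != 0.

(* V is Hamiltonian: i_V omega is exact on M_k \ {0} (i_V omega = dH with
   H a regular function, which is the restriction of a polynomial) *)
Definition hamiltonian (k : nat) (V : vfield) : Prop :=
  exists H : P, forall c p, in_chart k c p ->
    forall U, tangent_at k p U ->
      form1_at (interior V (omega_chart k c)) p U = dpol H p U.

(* V is symplectic: i_V omega is closed on M_k \ {0} *)
Definition symplectic (k : nat) (V : vfield) : Prop :=
  forall c p, in_chart k c p ->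
    forall U W, tangent_at k p U -> tangent_at k p W ->
      dform1_at (interior V (omega_chart k c)) p U W = 0.

End Defs.

(* Main.v *)
Require Import Defs.
From HB Require Import structures.
From mathcomp Require Import all_boot all_order all_algebra.
From mathcomp Require Import mpoly.
From mathcomp Require Import ring.
From Stdlib Require Import FunctionalExtensionality.
Set Implicit Arguments. Unset Strict Implicit. Unset Printing Implicit Defensive.
Import Order.TTheory GRing.Theory Num.Theory.
Local Open Scope ring_scope.


Section S0.
Variable F : numClosedFieldType.
Local Notation P := {mpoly F[3]}.

Lemma ev_x (p : pt F) : (xP F).@[p] = p i0. Proof. by rewrite /xP mevalXU. Qed.
Lemma ev_y (p : pt F) : (yP F).@[p] = p i1. Proof. by rewrite /yP mevalXU. Qed.
Lemma ev_z (p : pt F) : (zP F).@[p] = p i2. Proof. by rewrite /zP mevalXU. Qed.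

Lemma onME k (p : pt F) : onM k p <-> p i0 ^+ 2 + p i1 ^+ 2 + p i2 ^+ k.+1 = 0.
Proof. by rewrite /onM /fk !rmorphD !rmorphXn /= ev_x ev_y ev_z. Qed.

Lemma mderiv_XU (i j : 'I_3) : mderiv i ('X_j : P) = ((j == i)%:R)%:MP.
Proof.
rewrite mderivX -mul_mpolyC mpolyC_nat.
case: eqP => [->|/eqP ne]; last by rewrite mnm1E (negbTE ne) mul0r.
have -> : (U_(i) - U_(i) = 0)%MM by apply/mnmP=> l; rewrite !mnmE subnn.
by rewrite mnm1E eqxx mpolyX0 mulr1.
Qed.
End S0.


Section S1.
Variable F : numClosedFieldType.
Local Notation P := {mpoly F[3]}.

Lemma sum3 (T : nmodType) (f : 'I_3 -> T) : \sum_(i < 3) f i = f i0 + f i1 + f i2.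
Proof.
rewrite !big_ord_recr big_ord0 /= add0r.
by congr (f _ + f _ + f _); apply/val_inj.
Qed.

Lemma ev_dXn (i j : 'I_3) n (p : pt F) :
  (mderiv i (('X_j : P) ^+ n)).@[p] = (j == i)%:R * n%:R * p j ^+ n.-1.
Proof.
elim: n => [|n IH]; first by rewrite expr0 -mpolyC1 mderivC rmorph0 /=; ring.
rewrite exprS mderivM rmorphD !rmorphM /= IH mderiv_XU mevalC mevalXU.
case: n IH => [|n] IH /=; first by rewrite expr0 rmorph1 /=; ring.
rewrite rmorphXn /= mevalXU exprS; case: (j == i) => /=; last by ring.
rewrite -[n.+2]addn1 natrD; ring.
Qed.



Definition dF k (p : pt F) (i : 'I_3) : F :=
  if i == i0 then 2%:R * p i0 else if i == i1 then 2%:R * p i1 else (k.+1)%:R * p i2 ^+ k.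

Lemma ev_dfk k i (p : pt F) : (mderiv i (fk F k)).@[p] = dF k p i.
Proof.
rewrite /fk /xP /yP /zP !mderivD !rmorphD /= !ev_dXn /dF.
case: i => [[|[|[|i]]] Hi] //=; ring.
Qed.

Lemma dpol_fk k (p U : pt F) :
  dpol (fk F k) p U = 2%:R * p i0 * U i0 + 2%:R * p i1 * U i1 + (k.+1)%:R * p i2 ^+ k * U i2.
Proof. by rewrite /dpol sum3 !ev_dfk. Qed.

End S1.


Section S2.
Variable F : numClosedFieldType.
Local Notation P := {mpoly F[3]}.
Local Notation R := {poly {poly F}}.

Definition ev2 (y z : F) (A : R) : F := (map_poly (horner_eval z) A).[y].

Lemma ev2D y z : {morph ev2 y z : A B / A + B}.
Proof. by move=> A B; rewrite /ev2 rmorphD hornerD. Qed.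
Lemma ev2N y z : {morph ev2 y z : A / - A}.
Proof. by move=> A; rewrite /ev2 rmorphN hornerN. Qed.
Lemma ev2B y z : {morph ev2 y z : A B / A - B}.
Proof. by move=> A B; rewrite ev2D ev2N. Qed.
Lemma ev2M y z : {morph ev2 y z : A B / A * B}.
Proof. by move=> A B; rewrite /ev2 rmorphM hornerM. Qed.
Lemma ev2Xn y z (A : R) n : ev2 y z (A ^+ n) = ev2 y z A ^+ n.
Proof. by rewrite /ev2 rmorphXn horner_exp. Qed.
Lemma ev2_nat y z n : ev2 y z n%:R = n%:R.
Proof. by rewrite /ev2 rmorph_nat hornerMn hornerC. Qed.
Lemma ev2C y z (r : {poly F}) : ev2 y z r%:P = r.[z].
Proof. by rewrite /ev2 map_polyC hornerC. Qed.
Lemma ev2CC y z (c : F) : ev2 y z c%:P%:P = c.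
Proof. by rewrite ev2C hornerC. Qed.
Lemma ev2Y y z : ev2 y z 'X = y.
Proof. by rewrite /ev2 map_polyX hornerX. Qed.
Lemma ev2Z y z : ev2 y z ('X%:P) = z.
Proof. by rewrite ev2C hornerX. Qed.
Lemma ev2_0 y z : ev2 y z 0 = 0.
Proof. by rewrite /ev2 rmorph0 horner0. Qed.
Lemma ev2_1 y z : ev2 y z 1 = 1.
Proof. by rewrite /ev2 rmorph1 hornerC. Qed.

Definition ev2E := (ev2D, ev2B, ev2N, ev2M, ev2Xn, ev2_nat, ev2CC, ev2C, ev2Y, ev2Z, ev2_0, ev2_1).

Lemma nat_inj (i j : nat) : (i%:R == j%:R :> F) = (i == j).
Proof. by rewrite eqr_nat. Qed.

Lemma poly_zero (q : {poly F}) : (forall z, q.[z] = 0) -> q = 0.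
Proof.
move=> H; apply/eqP; apply/negPn/negP => nz.
have := max_poly_roots nz (rs := [seq i%:R | i <- iota 0 (size q)]).
rewrite size_map size_iota ltnn.
have -> : all (root q) [seq i%:R | i <- iota 0 (size q)].
  by apply/allP => x /mapP [i _ ->]; rewrite /root H.
have -> // : uniq [seq (i%:R : F) | i <- iota 0 (size q)].
  rewrite map_inj_uniq ?iota_uniq // => i j /eqP; rewrite eqr_nat => /eqP.
  by [].
by move/(_ isT isT).
Qed.

Lemma R_zero (A : R) : (forall y z, ev2 y z A = 0) -> A = 0.
Proof.
move=> H; apply/polyP => i; rewrite coef0; apply: poly_zero => z.
have E : map_poly (horner_eval z) A = 0 by apply: poly_zero => y; exact: H.
have := congr1 (fun q : {poly F} => q`_i) E.
by rewrite /= coef_map /= coef0.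
Qed.

End S2.


Section S3.
Variable F : numClosedFieldType.
Local Notation P := {mpoly F[3]}.
Local Notation R := {poly {poly F}}.

Definition SR k : R := 'X ^+ 2 + ('X ^+ k.+1)%:P.
Lemma ev2S k y z : ev2 y z (SR k) = y ^+ 2 + z ^+ k.+1.
Proof. by rewrite /SR !ev2E horner_exp hornerX. Qed.

Lemma SR_neq0 k : SR k != 0.
Proof.
apply/eqP => E; have := ev2S k 1 0; rewrite E ev2_0 expr1n expr0n /= addr0 => /eqP.
by rewrite eq_sym oner_eq0.
Qed.

Lemma two_neq0 : (2%:R : F) != 0. Proof. by rewrite pnatr_eq0. Qed.

Lemma L_AB k (A B : R) :
  (forall x y z : F, x ^+ 2 + y ^+ 2 + z ^+ k.+1 = 0 -> x * ev2 y z A + ev2 y z B = 0) ->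
  A = 0 /\ B = 0.
Proof.
move=> H.
have HB : forall y z, ev2 y z B = 0 /\ ev2 y z (SR k * A) = 0.
  move=> y z; set x := sqrtC (- (y ^+ 2 + z ^+ k.+1)).
  have hx : x ^+ 2 = - (y ^+ 2 + z ^+ k.+1) by rewrite sqrtCK.
  have h1 := H x y z; have h2 := H (- x) y z.
  have e1 : x ^+ 2 + y ^+ 2 + z ^+ k.+1 = 0 by rewrite hx; ring.
  have e2 : (- x) ^+ 2 + y ^+ 2 + z ^+ k.+1 = 0 by rewrite sqrrN.
  move: (h1 e1) (h2 e2); set a := ev2 y z A; set b := ev2 y z B => {h1 h2} h1 h2.
  have hb : 2%:R * b = (x * a + b) + (- x * a + b) by ring.
  rewrite h1 h2 addr0 in hb.
  have hxa : 2%:R * (x * a) = (x * a + b) - (- x * a + b) by ring.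
  rewrite h1 h2 subr0 in hxa.
  move: hb hxa => /eqP; rewrite mulf_eq0 (negbTE two_neq0) /= => /eqP hb.
  move/eqP; rewrite mulf_eq0 (negbTE two_neq0) /= => /eqP hxa.
  split => //; rewrite ev2M ev2S -/a.
  have -> : y ^+ 2 + z ^+ k.+1 = - x ^+ 2 by rewrite hx opprK.
  by rewrite expr2 mulNr -mulrA hxa mulr0 oppr0.
split; last by apply: R_zero => y z; case: (HB y z).
have : SR k * A = 0 by apply: R_zero => y z; case: (HB y z).
by move/eqP; rewrite mulf_eq0 (negbTE (SR_neq0 k)) => /eqP.
Qed.

End S3.


Lemma modM (F : comRingType) (e L R c : F) : e = 0 -> L - R = c * e -> L = R.
Proof. by move=> -> /eqP; rewrite mulr0 subr_eq0 => /eqP. Qed.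

Section S4.
Variable F : numClosedFieldType.
Local Notation P := {mpoly F[3]}.
Local Notation R := {poly {poly F}}.

Definition Pr k (h : P) := exists a b : R, forall p : pt F, onM k p ->
  h.@[p] = p i0 * ev2 (p i1) (p i2) a + ev2 (p i1) (p i2) b.

Lemma Pr_add k h g : Pr k h -> Pr k g -> Pr k (h + g).
Proof.
move=> [a1 [b1 H1]] [a2 [b2 H2]]; exists (a1 + a2), (b1 + b2) => p Hp.
by rewrite rmorphD /= H1 // H2 // !ev2E; ring.
Qed.

Lemma Pr_mul k h g : Pr k h -> Pr k g -> Pr k (h * g).
Proof.
move=> [a1 [b1 H1]] [a2 [b2 H2]].
exists (a1 * b2 + b1 * a2), (b1 * b2 - SR F k * a1 * a2) => p Hp.
rewrite rmorphM /= H1 // H2 // !ev2D !ev2N !ev2M ev2S.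
move/onME: Hp => Hp.
by apply: (modM (c := ev2 (p i1) (p i2) a1 * ev2 (p i1) (p i2) a2) Hp); ring.
Qed.

Lemma Pr_C k c : Pr k c%:MP.
Proof. by exists 0, c%:P%:P => p _; rewrite mevalC !ev2E; ring. Qed.

Lemma ord3 (i : 'I_3) : [\/ i = i0, i = i1 | i = i2].
Proof.
case: i => [[|[|[|i]]] Hi]; [apply: Or31|apply: Or32|apply: Or33|by []]; exact/val_inj.
Qed.

Lemma Pr_X k i : Pr k 'X_i.
Proof.
case: (ord3 i) => ->.
- by exists 1, 0 => p _; rewrite mevalXU ev2_1 ev2_0 mulr1 addr0.
- by exists 0, 'X => p _; rewrite mevalXU ev2Y ev2_0 mulr0 add0r.
- by exists 0, 'X%:P => p _; rewrite mevalXU ev2Z ev2_0 mulr0 add0r.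
Qed.

Lemma Pr_all k h : Pr k h.
Proof.
rewrite (mpolyE h); apply: (big_ind (Pr k)); first by rewrite -mpolyC0; exact: Pr_C.
  exact: Pr_add.
move=> m _; rewrite -mul_mpolyC; apply: Pr_mul; first exact: Pr_C.
rewrite mpolyXE_id; apply: (big_ind (Pr k)); first by rewrite -mpolyC1; exact: Pr_C.
  exact: Pr_mul.
move=> i _; elim: (m i) => [|n IH]; first by rewrite expr0 -mpolyC1; exact: Pr_C.
by rewrite exprS; apply: Pr_mul => //; exact: Pr_X.
Qed.

End S4.


Section S5.
Variable F : numClosedFieldType.
Local Notation P := {mpoly F[3]}.
Local Notation R := {poly {poly F}}.

Definition psi1 (r : {poly F}) : P := \sum_(j < size r) (r`_j)%:MP * zP F ^+ j.
Definition psi (A : R) : P := \sum_(i < size A) psi1 A`_i * yP F ^+ i.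

Lemma psi1_ev r (p : pt F) : (psi1 r).@[p] = r.[p i2].
Proof.
rewrite /psi1 rmorph_sum (horner_coef r); apply: eq_bigr => j _.
by rewrite rmorphM rmorphXn /= mevalC ev_z.
Qed.

Lemma psi_ev A (p : pt F) : (psi A).@[p] = ev2 (p i1) (p i2) A.
Proof.
rewrite /psi rmorph_sum /ev2 (horner_coef_wide _ (size_poly _ _)).
apply: eq_bigr => i _.
by rewrite rmorphM rmorphXn /= psi1_ev ev_y coef_poly ltn_ord.
Qed.

End S5.


Section S6.
Variable F : numClosedFieldType.
Local Notation P := {mpoly F[3]}.
Local Notation R := {poly {poly F}}.

Lemma take1 (A : R) : take_poly 1 A = (A`_0)%:P.
Proof.
apply/polyP => i; rewrite coef_take_poly coefC; case: i => //.
Qed.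

Lemma R_decomp k (a0 b1 b2 : R) :
  - (2%:R * SR F k * a0) + 2%:R * 'X * b1 + (k.+1)%:R * ('X%:P) ^+ k * b2 = 0 ->
  exists q : R, 2%:R * (b1 - 'X * a0) + ('X%:P) ^+ k * q = 0 /\
                (k.+1)%:R * b2 - 2%:R * 'X%:P * a0 = q * 'X.
Proof.
move=> hB.
have eZ : ('X ^+ k.+1)%:P = 'X%:P * ('X%:P) ^+ k :> R by rewrite rmorphXn exprS.
have HQ : 'X * (2%:R * (b1 - 'X * a0)) + ('X%:P) ^+ k * ((k.+1)%:R * b2 - 2%:R * 'X%:P * a0) = 0.
  by rewrite -hB /SR eZ; ring.
move: HQ; set Q := (k.+1)%:R * b2 - 2%:R * 'X%:P * a0 => HQ.
have H0 := congr1 (fun r : R => r`_0) HQ.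
rewrite /= coefD coefXM /= add0r -rmorphXn coefCM coef0 in H0.
move/eqP: H0; rewrite mulf_eq0 expf_eq0 polyX_eq0 andbF /= => /eqP Q0.
have eQ : Q = drop_poly 1 Q * 'X.
  by rewrite -{1}(poly_take_drop 1 Q) take1 Q0 polyC0 add0r expr1.
exists (drop_poly 1 Q); split; last by rewrite -eQ.
have : 'X * (2%:R * (b1 - 'X * a0) + ('X%:P) ^+ k * drop_poly 1 Q) = 0.
  by rewrite -HQ {2}eQ; ring.
by move/eqP; rewrite mulf_eq0 polyX_eq0 /= => /eqP.
Qed.

Lemma a_decomp k (a : R) : exists al : R,
  a = (take_poly k a`_0)%:P + (drop_poly k a`_0 * 'X ^+ k)%:P + al * 'X.
Proof.
exists (drop_poly 1 a).
rewrite -rmorphD poly_take_drop -{1}(poly_take_drop 1 a) take1 expr1 //.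
Qed.

End S6.


Lemma modMF (F : numClosedFieldType) (e L R c : F) : e = 0 -> L - R = c * e -> L = R.
Proof. by move=> -> /eqP; rewrite mulr0 subr_eq0 => /eqP. Qed.

Lemma final_id (F : numClosedFieldType) (K x y z t a0 a1 a2 b0 b1 b2 q al be T : F) :
  K != 0 ->
  x ^+ 2 + y ^+ 2 + z * t = 0 ->
  2%:R * b0 + 2%:R * y * a1 + K * t * a2 = 0 ->
  2%:R * (b1 - y * a0) + t * q = 0 ->
  K * b2 - 2%:R * z * a0 = q * y ->
  a0 = T + be * t + al * y ->
  let g1 := - (2%:R^-1 * K^-1) * q - K^-1 * z * al + K^-1 * y * be in
  let g2 := 2%:R^-1 * a2 - K^-1 * x * be in
  let g3 := - 2%:R^-1 * a1 + 2%:R^-1 * x * al in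
  let zp := K^-1 * T in
  [/\ x * a0 + b0 = g1 * 0 + g2 * (- (K * t)) + g3 * (2%:R * y) + zp * (K * x),
      x * a1 + b1 = g1 * (K * t) + g2 * 0 + g3 * (- (2%:R * x)) + zp * (K * y) &
      x * a2 + b2 = g1 * (- (2%:R * y)) + g2 * (2%:R * x) + g3 * 0 + zp * (2%:R * z)].
Proof.
move=> K0 E E1 EP EQ Ea g1 g2 g3 zp.
have two0 : (2%:R : F) != 0 by rewrite pnatr_eq0.
have hb0 : b0 = - (y * a1) - 2%:R^-1 * K * t * a2.
  apply: (mulfI two0); rewrite -[2%:R * b0]subr0 -E1; by field.
have hb1 : b1 = y * a0 - 2%:R^-1 * t * q.
  apply: (mulfI two0); rewrite -[2%:R * b1]subr0 -EP; by field.
have hb2 : b2 = K^-1 * (q * y + 2%:R * z * a0).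
  apply: (mulfI K0); rewrite -EQ; by field.
rewrite /g1 /g2 /g3 /zp hb0 hb1 hb2 Ea; split.
- by field.
- by apply: (modMF (c := al) E); field.
- by apply: (modMF (c := 2%:R * K^-1 * be) E); field.
Qed.


Section S8.
Variable F : numClosedFieldType.
Local Notation P := {mpoly F[3]}.
Local Notation R := {poly {poly F}}.

Lemma modMF2 (e1 e2 L R c1 c2 : F) : e1 = 0 -> e2 = 0 -> L - R = c1 * e1 + c2 * e2 -> L = R.
Proof. by move=> -> -> /eqP; rewrite !mulr0 addr0 subr_eq0 => /eqP. Qed.

Definition ev2E' := (ev2D, ev2N, ev2M, ev2Xn, ev2_nat, ev2Y, ev2Z, ev2_0, ev2_1).

Definition mkpt (x y z : F) : pt F := fun i => if i == i0 then x else if i == i1 then y else z.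
Lemma mkpt0 x y z : mkpt x y z i0 = x. Proof. by []. Qed.
Lemma mkpt1 x y z : mkpt x y z i1 = y. Proof. by []. Qed.
Lemma mkpt2 x y z : mkpt x y z i2 = z. Proof. by []. Qed.

Lemma zpoly_ev k (c : 'I_k -> F) (p : pt F) :
  (zpoly c).@[p] = \sum_(i < k) c i * p i2 ^+ i.
Proof.
rewrite /zpoly rmorph_sum; apply: eq_bigr => i _.
by rewrite rmorphM rmorphXn /= mevalC ev_z.
Qed.

Lemma take_ev k (r : {poly F}) z : (take_poly k r).[z] = \sum_(i < k) r`_i * z ^+ i.
Proof.
rewrite (horner_coef_wide _ (size_take_poly _ _)); apply: eq_bigr => i _.
by rewrite coef_take_poly ltn_ord.
Qed.

Lemma K_neq0 k : ((k.+1)%:R : F) != 0. Proof. by rewrite pnatr_eq0. Qed.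

Lemma forward k (V : vfield F) : tangent_vf k V ->
  exists (g1 g2 g3 : P) (c : 'I_k -> F),
       eqOnM k V
         (vf_add (vf_add (vf_add (vf_scale g1 (Vx F k)) (vf_scale g2 (Vy F k)))
                         (vf_scale g3 (Vz F k)))
                 (vf_scale (zpoly c) (Lam F k))).
Proof.
move=> HV.
have [a0 [b0 H0]] := Pr_all k (V i0).
have [a1 [b1 H1]] := Pr_all k (V i1).
have [a2 [b2 H2]] := Pr_all k (V i2).
have [hA hB] : 2%:R * b0 + 2%:R * 'X * a1 + (k.+1)%:R * ('X%:P) ^+ k * a2 = 0 /\
   - (2%:R * SR F k * a0) + 2%:R * 'X * b1 + (k.+1)%:R * ('X%:P) ^+ k * b2 = 0.
  apply: (L_AB (k := k)) => x y z E.
  have Hp : onM k (mkpt x y z) by apply/onME.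
  have := HV _ Hp.
  rewrite /vf_act rmorph_sum sum3 !rmorphM /= !ev_dfk /dF /=.
  rewrite H0 // H1 // H2 // !mkpt0 !mkpt1 !mkpt2.
  rewrite !ev2D !ev2N !ev2M ev2S !ev2Xn !ev2_nat ev2Y ev2Z => HT.
  rewrite [z ^+ k.+1]exprS in E |- *.
  by apply: (modMF2 (c1 := 1) (c2 := - (2%:R * ev2 y z a0)) HT E); ring.
have [q [hP hQ]] := R_decomp hB.
have [al Ha] := a_decomp k a0.
pose K := (k.+1)%:R : F.
pose be := drop_poly k a0`_0.
exists (- ((2%:R^-1 * K^-1)%:MP) * psi q - (K^-1)%:MP * zP F * psi al + (K^-1)%:MP * yP F * psi be%:P).
exists ((2%:R^-1)%:MP * psi a2 - (K^-1)%:MP * xP F * psi be%:P).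
exists (- ((2%:R^-1)%:MP) * psi a1 + (2%:R^-1)%:MP * xP F * psi al).
exists (fun i : 'I_k => K^-1 * a0`_0`_i).
move=> p Hp; apply: functional_extensionality => i.
set x := p i0; set y := p i1; set z := p i2.
have E : x ^+ 2 + y ^+ 2 + z * z ^+ k = 0 by rewrite -exprS; apply/onME.
have E1 := congr1 (ev2 y z) hA.
rewrite !ev2E' in E1.
have EP := congr1 (ev2 y z) hP.
rewrite !ev2E' in EP.
have EQ := congr1 (ev2 y z) hQ.
rewrite !ev2E' in EQ.
have Ea := congr1 (ev2 y z) Ha.
rewrite !ev2D !ev2M ev2Y !ev2C hornerM horner_exp hornerX in Ea.
have zp : (zpoly (fun i : 'I_k => K^-1 * a0`_0`_i)).@[p] = K^-1 * (take_poly k a0`_0).[z].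
  by rewrite zpoly_ev take_ev big_distrr; apply: eq_bigr => j _ /=; rewrite mulrA.
have := final_id (K_neq0 k) E E1 EP EQ Ea.
rewrite /= => -[c0 c1 c2].
rewrite /K /be in c0 c1 c2 zp *.
case: (ord3 i) => ->; rewrite /vf_at /vf_add /vf_scale /Vx /Vy /Vz /Lam /mk3 /=;
  rewrite !(mevalD, mevalN, mevalM, psi_ev, mevalC, rmorph_nat, rmorphXn, zp, ev_x, ev_y, ev_z, ev2C, rmorph0) /= ?ev_z -/x -/y -/z.
- by rewrite H0 // -/x -/y -/z c0; ring.
- by rewrite H1 // -/x -/y -/z c1; ring.
- by rewrite H2 // -/x -/y -/z c2; ring.
Qed.

End S8.


Section S9.
Variable F : numClosedFieldType.
Local Notation P := {mpoly F[3]}.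
Local Notation R := {poly {poly F}}.

Lemma backward k (V : vfield F) (g1 g2 g3 : P) (c : 'I_k -> F) :
  eqOnM k V
         (vf_add (vf_add (vf_add (vf_scale g1 (Vx F k)) (vf_scale g2 (Vy F k)))
                         (vf_scale g3 (Vz F k)))
                 (vf_scale (zpoly c) (Lam F k))) -> tangent_vf k V.
Proof.
move=> HE p Hp; have E := HE p Hp.
have e i := congr1 (fun f => f i) E.
rewrite /vf_act rmorph_sum sum3 !rmorphM /= !ev_dfk /dF /=.
move: (e i0) (e i1) (e i2); rewrite /vf_at /vf_add /vf_scale /Vx /Vy /Vz /Lam /mk3 /= => -> -> ->.
rewrite !(mevalD, mevalN, mevalM, mevalC, rmorph_nat, rmorphXn, ev_x, ev_y, ev_z, rmorph0) /= ?ev_z.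
move/onME: Hp; rewrite [p i2 ^+ k.+1]exprS => Hp.
apply: (modMF (c := 2%:R * (k.+1)%:R * (zpoly c).@[p]) Hp); ring.
Qed.

Lemma eq_via (L L1 R1 : F) : L1 = R1 -> L = L1 - R1 -> L = 0.
Proof. by move=> -> ->; rewrite subrr. Qed.

Lemma direct k (g1 g2 g3 : P) (c : 'I_k -> F) :
     eqOnM k (vf_add (vf_add (vf_scale g1 (Vx F k)) (vf_scale g2 (Vy F k)))
                     (vf_scale g3 (Vz F k)))
             (vf_scale (zpoly c) (Lam F k)) ->
     eqOnM k (vf_scale (zpoly c) (Lam F k)) (fun _ => 0).
Proof.
move=> HE.
suff Hc : forall j, c j = 0.
  move=> p Hp; apply: functional_extensionality => i.
  rewrite /vf_at /vf_scale mevalM zpoly_ev big1 ?mul0r ?rmorph0 // => j _.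
  by rewrite Hc mul0r.
have [a2 [b2 H2]] := Pr_all k g2; have [a3 [b3 H3]] := Pr_all k g3.
pose C := \sum_(i < k) (c i)%:P * 'X^i : {poly F}.
have HCev z : C.[z] = \sum_(i < k) c i * z ^+ i.
  by rewrite /C horner_sum; apply: eq_bigr => i _; rewrite hornerCM hornerXn.
have [hA _] : 'X * (2%:R * a3) - (k.+1)%:R%:P%:P * (('X^k)%:P * a2 + C%:P) = 0 /\
              'X * (2%:R * b3) - (k.+1)%:R%:P%:P * (('X^k)%:P * b2) = 0.
  apply: (L_AB (k := k)) => x y z E.
  have Hp : onM k (mkpt x y z) by apply/onME.
  have := congr1 (fun f => f i0) (HE _ Hp).
  rewrite /vf_at /vf_add /vf_scale /Vx /Vy /Vz /Lam /mk3 /=.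
  rewrite !(mevalD, mevalN, mevalM, mevalC, rmorph_nat, rmorphXn, ev_x, ev_y, ev_z, rmorph0) /= ?ev_z.
  rewrite H2 // H3 // zpoly_ev !mkpt0 !mkpt1 !mkpt2 -HCev.
  rewrite !ev2E' ?ev2CC ?ev2C ?horner_exp ?hornerX => h.
  by apply: (eq_via h); ring.
have h0 := congr1 (fun r : R => r`_0) hA.
rewrite /= coefB coefXM /= sub0r coefCM coefD !coefCM coefC /= coef0 in h0.
move/eqP: h0; rewrite oppr_eq0 mulf_eq0 polyC_eq0 pnatr_eq0 /= => /eqP h0.
move=> j.
have := congr1 (fun r : {poly F} => r`_j) h0.
rewrite /= coefD coefXnM ltn_ord add0r coef0 /C coef_sum => <-.
rewrite (bigD1 j) //= big1 ?addr0; first by rewrite coefCM coefXn eqxx mulr1.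
move=> i ne; rewrite coefCM coefXn; case: eqP => [ji|]; last by rewrite mulr0.
by have := ne; rewrite (val_inj ji) eqxx.
Qed.

End S9.


Section S10.
Variable F : numClosedFieldType.
Local Notation P := {mpoly F[3]}.

Lemma div_eq (N M D : F) : D != 0 -> N = M * D -> N / D = M.
Proof. by move=> nz ->; rewrite mulfK. Qed.

Lemma dpol_X (j : 'I_3) (p U : pt F) : dpol (- ('X_j : P)) p U = - U j.
Proof.
rewrite /dpol sum3 !mderivN !mderiv_XU !mevalN !mevalC.
by case: (ord3 j) => -> /=; ring.
Qed.

Lemma ham_gen k (V : vfield F) (j : 'I_3) :
  (forall c p U, (omega_chart F k c).2.@[p] != 0 -> tangent_at k p U ->
     form1_at (interior V (omega_chart F k c)) p U = - U j) ->
  hamiltonian k V.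
Proof.
move=> H; exists (- 'X_j) => c p [_ [_ hD]] U hU.
by rewrite dpol_X; apply: H.
Qed.

Lemma ham_Vx k : hamiltonian k (Vx F k).
Proof.
apply: (ham_gen (j := i0)) => c p U hD hU.
rewrite /tangent_at dpol_fk in hU.
apply: div_eq => //.
case: (ord3 c) => -> /=; rewrite /interior /wedge /Vx /mk3 /= !sum3 /=;
rewrite !(mevalD, mevalN, mevalM, mevalC, rmorph_nat, rmorphXn, ev_x, ev_y, ev_z, rmorph0, rmorph1) /= ?ev_z;
first [ring | by apply: (modMF (c := 1) hU); ring | by apply: (modMF (c := -1) hU); ring].
Qed.

Lemma ham_Vy k : hamiltonian k (Vy F k).
Proof.
apply: (ham_gen (j := i1)) => c p U hD hU.
rewrite /tangent_at dpol_fk in hU.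
apply: div_eq => //.
case: (ord3 c) => -> /=; rewrite /interior /wedge /Vy /mk3 /= !sum3 /=;
rewrite !(mevalD, mevalN, mevalM, mevalC, rmorph_nat, rmorphXn, ev_x, ev_y, ev_z, rmorph0, rmorph1) /= ?ev_z;
first [ring | by apply: (modMF (c := 1) hU); ring | by apply: (modMF (c := -1) hU); ring].
Qed.

Lemma ham_Vz k : hamiltonian k (Vz F k).
Proof.
apply: (ham_gen (j := i2)) => c p U hD hU.
rewrite /tangent_at dpol_fk in hU.
apply: div_eq => //.
case: (ord3 c) => -> /=; rewrite /interior /wedge /Vz /mk3 /= !sum3 /=;
rewrite !(mevalD, mevalN, mevalM, mevalC, rmorph_nat, rmorphXn, ev_x, ev_y, ev_z, rmorph0, rmorph1) /= ?ev_z;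
first [ring | by apply: (modMF (c := 1) hU); ring | by apply: (modMF (c := -1) hU); ring].
Qed.

End S10.


Section S11.
Variable F : numClosedFieldType.
Local Notation P := {mpoly F[3]}.

Lemma mderiv_nat (i : 'I_3) n : mderiv i (n%:R : P) = 0.
Proof. by rewrite -mpolyC_nat mderivC. Qed.

Lemma not_sympl k : ~ symplectic k (Lam F k).
Proof.
have K0 := K_neq0 F k.
pose p := mkpt 0 'i 1 : pt F; pose U := mkpt 1 0 0 : pt F; pose W := mkpt 0 (k.+1)%:R (- (2%:R * 'i)) : pt F.
have Hp : onM k p by apply/onME; rewrite /p mkpt0 mkpt1 mkpt2 expr1n sqrCi expr0n /=; ring.
have hD : (omega_chart F k i2).2.@[p] != 0.
  by rewrite /omega_chart /= mevalM rmorph_nat rmorphXn /= ev_z /p mkpt2 expr1n mulr1 pnatr_eq0.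
have hU : tangent_at k p U by rewrite /tangent_at dpol_fk /p /U !mkpt0 !mkpt1 !mkpt2; ring.
have hW : tangent_at k p W by rewrite /tangent_at dpol_fk /p /W !mkpt0 !mkpt1 !mkpt2 expr1n; ring.
have hp0 : p <> (fun _ => 0).
  by move/(congr1 (fun f => f i2)); rewrite /p mkpt2 => /eqP; rewrite oner_eq0.
move=> /(_ i2 p (conj Hp (conj hp0 hD)) U W hU hW).
rewrite /dform1_at /dpol /interior /omega_chart /wedge /Lam /mk3 /= !sum3 /=.
rewrite ?subrr ?subr0 ?sub0r ?mulr0 ?mulr1 ?addr0 ?add0r.
rewrite !(mderivD, mderivN, mderivM, mderiv_XU, mderiv_nat, mderiv0).
rewrite !(mevalD, mevalN, mevalM, mevalC, rmorph_nat, ev_x, ev_y, ev_z, ev_dXn, rmorph0, rmorphXn) /= ?ev_z.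
rewrite /p /U /W !mkpt0 !mkpt1 !mkpt2 /=.
rewrite !expr1n => h.
have : (2%:R : F) = 0; last by apply/eqP; rewrite pnatr_eq0.
rewrite -h; have ei : 'i ^+ 2 + 1 = 0 :> F by rewrite sqrCi addNr.
apply: (modMF (c := - (2%:R * k%:R)) ei); field.
by rewrite addrC natr1.
Qed.

End S11.

Theorem lemma4p5 (F : numClosedFieldType) (k : nat) :
  (* polynomial vector fields on M_k = the sum *)
  (forall V : vfield F, tangent_vf k V <->
     exists (g1 g2 g3 : {mpoly F[3]}) (c : 'I_k -> F),
       eqOnM k V
         (vf_add (vf_add (vf_add (vf_scale g1 (Vx F k)) (vf_scale g2 (Vy F k)))
                         (vf_scale g3 (Vz F k)))
                 (vf_scale (zpoly c) (Lam F k)))) /\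
  (* the sum is direct *)
  (forall (g1 g2 g3 : {mpoly F[3]}) (c : 'I_k -> F),
     eqOnM k (vf_add (vf_add (vf_scale g1 (Vx F k)) (vf_scale g2 (Vy F k)))
                     (vf_scale g3 (Vz F k)))
             (vf_scale (zpoly c) (Lam F k)) ->
     eqOnM k (vf_scale (zpoly c) (Lam F k)) (fun _ => 0)) /\
  (* V^x, V^y, V^z are Hamiltonian on M_k \ {0} *)
  hamiltonian k (Vx F k) /\ hamiltonian k (Vy F k) /\ hamiltonian k (Vz F k) /\
  (* Lambda is not symplectic *)
  ~ symplectic k (Lam F k).
Proof.
split.
  move=> V; split; first exact: forward.
  by move=> [g1 [g2 [g3 [c H]]]]; exact: backward H.
split; first by move=> g1 g2 g3 c; exact: direct.
split; first exact: ham_Vx.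
split; first exact: ham_Vy.
split; first exact: ham_Vz.
exact: not_sympl.
Qed.
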